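(* Let $G$ be an arc-transitive group of automorphisms of a connected symmetric graph $X=X_0$, and let $X_2\xrightarrow{\wp_2}X_1\xrightarrow{\wp_1}X_0$ be a $G$-admissible chain of two consecutive $2$-covers, with lifted groups $G=G_0$, $G_1$, $G_2$. If $\wp_2$ is split-transitive (respectively, split-sectional) relative to $G_1$, then there exists a $G$-admissible chain $X_2\xrightarrow{\wp_2'}X_1'\xrightarrow{\wp_1'}X_0$ of two consecutive $2$-covers such that $\wp_1'$ is split-transitive (respectively, split-sectional) relative to $G$.
   Context: Graphs are finite, simple and connected; maps are composed on the right. A regular covering projection $\wp\colon\tilde Y\to Y$ is a surjective graph homomorphism, locally bijective on neighbourhoods, whose group $\mathrm{CT}(\wp)$ of covering transformations (automorphisms $c$ with $c\wp=\wp$) acts regularly on fibres; a $2$-cover has $\mathrm{CT}(\wp)\cong\mathbb{Z}_2$. A lift of $g\in\mathrm{Aut}\,Y$ is $\tilde g$ with $\wp g=\tilde g\wp$; if all elements of $K\leq\mathrm{Aut}\,Y$ lift, the lifted group $\tilde K$ is the group of all lifts. $\wp$ is $K$-split if $\mathrm{CT}(\wp)$ has a complement in $\tilde K$. A section is a vertex set meeting each fibre in exactly one vertex; a complement is sectional if it leaves some section invariant and transitive if it is transitive on $V(\tilde Y)$. For $K$ vertex-transitive, $\wp$ is split-sectional (resp. split-transitive) relative to $K$ if it is $K$-split and all complements of $\mathrm{CT}(\wp)$ in $\tilde K$ are sectional (resp. transitive). A chain $X_n\xrightarrow{\wp_n}\cdots\xrightarrow{\wp_1}X_0$ of consecutive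 $2$-covers is $G$-admissible if there are $G=G_0,G_1,\dots,G_n$ with $G_j\leq\mathrm{Aut}\,X_j$ the lift of $G_{j-1}$ along $\wp_j$. *)

(* Defs.v *)
From HB Require Import structures.
From mathcomp Require Import all_boot all_order all_fingroup.
Set Implicit Arguments. Unset Strict Implicit. Unset Printing Implicit Defensive.
Local Open Scope group_scope.

Record graph := Graph {
  vert : finType;
  adj : rel vert;
  adj_sym : symmetric adj;
  adj_irr : irreflexive adj;
  adj_conn : forall x y : vert, connect adj x y }.

Arguments adj : clear implicits.

Definition Aut (Y : graph) : {set {perm vert Y}} :=
  [set g : {perm vert Y} | [forall x, forall y, adj Y (g x) (g y) == adj Y x y]].

Section Graphs.
Variables (Y Yt : graph).

Definition arc_transitive (G : {set {perm vert Y}}) : Prop :=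
  G \subset Aut Y /\
  forall u v u' v' : vert Y, adj Y u v -> adj Y u' v' ->
    exists2 g, g \in G & g u = u' /\ g v = v'.

Definition vertex_transitive (G : {set {perm vert Y}}) : Prop :=
  [transitive G, on [set: vert Y] | 'P].

Variable p : vert Yt -> vert Y.

Definition covering_projection : Prop :=
  [/\ forall y, exists x, p x = y,
      forall x x', adj Yt x x' -> adj Y (p x) (p x') ,
      forall x, {in adj Yt x &, injective p} &
      forall x w, adj Y (p x) w -> exists2 x', adj Yt x x' & p x' = w].

Definition CT : {set {perm vert Yt}} :=
  [set c in Aut Yt | [forall x, p (c x) == p x]].

Definition regular_cover : Prop :=
  covering_projection /\
  forall x x', p x = p x' -> exists! c, c \in CT /\ c x = x'.

Definition two_cover : Prop := regular_cover /\ #|CT| = 2%N.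

(* gt is a lift of g:  p g = gt p  (maps composed on the right). *)
Definition is_lift (g : {perm vert Y}) (gt : {perm vert Yt}) : bool :=
  [forall x, p (gt x) == g (p x)].

Definition lifts (K : {set {perm vert Y}}) : Prop :=
  forall g, g \in K -> exists2 gt, gt \in Aut Yt & is_lift g gt.

Definition lifted (K : {set {perm vert Y}}) : {set {perm vert Yt}} :=
  [set gt in Aut Yt | [exists g in K, is_lift g gt]].

Definition split (K : {set {perm vert Y}}) : Prop :=
  exists H : {group {perm vert Yt}}, H \in [complements to CT in lifted K].

Definition section (S : {set vert Yt}) : Prop :=
  forall y : vert Y, #|[set x in S | p x == y]| = 1%N.

Definition sectional (H : {set {perm vert Yt}}) : Prop :=
  exists2 S, section S & forall h, h \in H -> [set h x | x in S] = S.

Definition transitive_cmp (H : {set {perm vert Yt}}) : Prop :=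
  [transitive H, on [set: vert Yt] | 'P].

Definition split_sectional (K : {set {perm vert Y}}) : Prop :=
  [/\ vertex_transitive K, lifts K, split K &
      forall H : {group {perm vert Yt}},
        H \in [complements to CT in lifted K] -> sectional H].

Definition split_transitive (K : {set {perm vert Y}}) : Prop :=
  [/\ vertex_transitive K, lifts K, split K &
      forall H : {group {perm vert Yt}},
        H \in [complements to CT in lifted K] -> transitive_cmp H].

End Graphs.

(* A G-admissible chain X2 -p2-> X1 -p1-> X0 of two consecutive 2-covers:
   G_1 = lifted p1 G and G_2 = lifted p2 G_1. *)
Definition admissible2 (X0 X1 X2 : graph) (G : {set {perm vert X0}})
  (p1 : vert X1 -> vert X0) (p2 : vert X2 -> vert X1) : Prop :=
  [/\ two_cover p1, two_cover p2, lifts p1 G & lifts p2 (lifted p1 G)].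

(* Main.v *)
Require Import Defs.
From mathcomp Require Import all_boot all_order all_fingroup.
Import Defs.
Set Warnings "-notation-overridden".
Set Implicit Arguments. Unset Strict Implicit. Unset Printing Implicit Defensive.
Local Open Scope group_scope.

Lemma connect_map (T T' : finType) (e : rel T) (e' : rel T') (h : T -> T') :
  (forall x y, e x y -> e' (h x) (h y)) ->
  forall x y, connect e x y -> connect e' (h x) (h y).
Proof.
move=> he x y /connectP[p]; elim: p x => [|z p IH] x /=.
  by move=> _ ->; exact: connect0.
case/andP=> exz pz ly; exact: connect_trans (connect1 (he _ _ exz)) (IH _ pz ly).
Qed.

Lemma AutP (Y : graph) (g : {perm vert Y}) :
  reflect (forall x y, adj Y (g x) (g y) = adj Y x y) (g \in Aut Y).
Proof.
rewrite inE; apply: (iffP forallP) => [H x y | H x]; first by apply/eqP; have /forallP := H x.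
by apply/forallP => y; rewrite H.
Qed.

Lemma Aut_group_set (Y : graph) : group_set (Aut Y).
Proof.
apply/group_setP; split; first by apply/AutP => x y; rewrite !perm1.
move=> g h /AutP Hg /AutP Hh; apply/AutP => x y; by rewrite !permM Hh Hg.
Qed.
Canonical Aut_group (Y : graph) := Group (Aut_group_set Y).

Lemma CTP (Y Yt : graph) (p : vert Yt -> vert Y) c :
  reflect (c \in Aut Yt /\ forall x, p (c x) = p x) (c \in CT p).
Proof.
rewrite /CT in_set; apply: (iffP andP) => [[a /forallP b] | [a b]]; split => //.
  by move=> x; apply/eqP.
by apply/forallP => x; rewrite b.
Qed.

Lemma CT_group_set (Y Yt : graph) (p : vert Yt -> vert Y) : group_set (CT p).
Proof.
apply/group_setP; split; first by apply/CTP; split; [exact: group1 | move=> x; rewrite perm1].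
move=> g h /CTP[ag pg] /CTP[ah ph]; apply/CTP; split; first exact: groupM.
by move=> x; rewrite permM ph pg.
Qed.
Canonical CT_group (Y Yt : graph) (p : vert Yt -> vert Y) := Group (CT_group_set p).

Lemma is_liftP (Y Yt : graph) (p : vert Yt -> vert Y) (g : {perm vert Y}) (gt : {perm vert Yt}) :
  reflect (forall x, p (gt x) = g (p x)) (is_lift p g gt).
Proof. apply: (iffP forallP) => H x; [exact/eqP | by rewrite H]. Qed.

Lemma liftedP (Y Yt : graph) (p : vert Yt -> vert Y) (K : {set {perm vert Y}}) (gt : {perm vert Yt}) :
  reflect (gt \in Aut Yt /\ exists2 g, g \in K & forall x, p (gt x) = g (p x))
    (gt \in lifted p K).
Proof.
have -> : (gt \in lifted p K) = (gt \in Aut Yt) && [exists g in K, is_lift p g gt].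
  by rewrite /lifted; apply: in_set.
apply: (iffP andP) => [[a /existsP[g /andP[gK /is_liftP l]]] | [a [g gK l]]].
  by split => //; exists g.
by split => //; apply/existsP; exists g; rewrite gK; apply/is_liftP.
Qed.

Lemma lifted_group_set (Y Yt : graph) (p : vert Yt -> vert Y) (K : {group {perm vert Y}}) :
  group_set (lifted p K).
Proof.
apply/group_setP; split.
  by apply/liftedP; split; [exact: group1 | exists 1; [exact: group1 | move=> x; rewrite !perm1]].
move=> g h /liftedP[ag [g0 g0K lg]] /liftedP[ah [h0 h0K lh]]; apply/liftedP; split.
  exact: groupM.
by exists (g0 * h0); [exact: groupM | move=> x; rewrite !permM lh lg].
Qed.
Canonical lifted_group (Y Yt : graph) (p : vert Yt -> vert Y) (K : {group {perm vert Y}}) :=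
  Group (lifted_group_set p K).

Lemma ct_fix (Y Yt : graph) (p : vert Yt -> vert Y) (c : {perm vert Yt}) x :
  covering_projection p -> c \in CT p -> c x = x -> c = 1.
Proof.
case=> _ hom inj _ /CTP[/AutP ca cp] cx; apply/permP => y; rewrite perm1.
have /connectP[s] := adj_conn x y; elim: s x cx => [|z s IH] w /=; first by move=> cw _ ->.
move=> cw /andP[wz sz] ly; apply: IH sz ly.
apply: (inj w); rewrite ?cp //.
by have : adj Yt w (c z) by rewrite -{1}cw ca.
Qed.

Lemma cover_comp (X0 X1 X2 : graph) (p1 : vert X1 -> vert X0) (p2 : vert X2 -> vert X1) :
  covering_projection p1 -> covering_projection p2 ->
  covering_projection (fun x => p1 (p2 x)).
Proof.
case=> s1 h1 i1 l1 [s2 h2 i2 l2]; split.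
- move=> y; have [x1 <-] := s1 y; have [x2 <-] := s2 x1; by exists x2.
- by move=> x x' /h2 /h1.
- move=> x y y' yx y'x e; apply: (i2 x) => //; apply: (i1 (p2 x)) => //.
  + exact: h2 yx.
  + exact: h2 y'x.
- move=> x w /l1 [x1 a1 <-]; have [x2 a2 e2] := l2 _ _ a1; by exists x2; rewrite ?e2.
Qed.

Lemma cover_factor (Y W Z : graph) (r : vert Z -> vert W) (s : vert W -> vert Y)
  (f : vert Z -> vert Y) :
  covering_projection r -> covering_projection f -> (forall z, s (r z) = f z) ->
  covering_projection s.
Proof.
case=> sr hr ir lr [sf hf if_ lf] E; split.
- move=> y; have [z <-] := sf y; by exists (r z).
- move=> a b ab; have [z zE] := sr a; subst a; have [z' az' <-] := lr z b ab; rewrite !E; exact: hf.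
- move=> a b b' ab ab' e; have [z zE] := sr a; subst a.
  have [y zy yb] := lr z b ab; have [y' zy' yb'] := lr z b' ab'; subst b b'.
  by rewrite (if_ z y y') // -!E e.
- move=> a w aw; have [z zE] := sr a; subst a; rewrite E in aw.
  have [y zy <-] := lf z w aw; exists (r y); [exact: hr | exact: E].
Qed.

Lemma fibre_card (Y Yt : graph) (p : vert Yt -> vert Y) x :
  regular_cover p -> #|[set x' | p x' == p x]| = #|CT p|.
Proof.
case=> cov reg.
have -> : [set x' | p x' == p x] = [set (fun_of_perm c) x | c in CT p].
  apply/setP => y; rewrite inE; apply/eqP/imsetP => [e | [c /CTP[_ cp] ->]]; last exact: cp.
  have [c [[cC cx] _]] := reg x y (esym e); by exists c.
apply: card_in_imset => c d cC dC e.
have : (c * d^-1) x = x by rewrite permM e permK.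
move/(ct_fix cov (groupM cC (groupVr dC)))/eqP; rewrite mulg_eq1 => /eqP.
by rewrite invgK.
Qed.

Lemma ct_eq (Y Yt : graph) (p : vert Yt -> vert Y) (c d : {perm vert Yt}) x :
  covering_projection p -> c \in CT p -> d \in CT p -> c x = d x -> c = d.
Proof.
move=> cov cC dC e.
have : (c * d^-1) x = x by rewrite permM e permK.
move/(ct_fix cov (groupM cC (groupVr dC)))/eqP; rewrite mulg_eq1 => /eqP.
by rewrite invgK.
Qed.

Section Quot.
Variables (X Y : graph) (f : vert X -> vert Y) (N : {group {perm vert X}}).
Hypotheses (fcov : covering_projection f) (NCT : N \subset CT f).

Definition orb x := orbit 'P N x.

Lemma orbP x y : reflect (exists2 c, c \in N & c x = y) (y \in orb x).
Proof. exact: (iffP orbitP). Qed.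

Lemma orb_refl x : x \in orb x.
Proof. exact: orbit_refl. Qed.

Lemma N_CT c : c \in N -> c \in CT f.
Proof. exact: (subsetP NCT). Qed.

Lemma N_aut c : c \in N -> c \in Aut X.
Proof. by move/N_CT/CTP=> []. Qed.

Lemma f_orb x y : y \in orb x -> f y = f x.
Proof. by case/orbP=> c cN <-; move/N_CT/CTP: cN => [_ ->]. Qed.

Definition Vt := {A : {set vert X} | [exists x, A == orb x]}.

Lemma q_proof x : [exists y, orb x == orb y].
Proof. by apply/existsP; exists x. Qed.

Definition q x : Vt := exist _ (orb x) (q_proof x).

Lemma qE x y : (q x == q y) = (y \in orb x).
Proof.
rewrite -val_eqE /= orbit_sym /orb; apply/eqP/idP => [e | /orbit_eqP //].
by have := orb_refl x; rewrite /orb e.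
Qed.

Lemma qP x y : reflect (q x = q y) (y \in orb x).
Proof. by rewrite -qE; apply: eqP. Qed.

Definition rep (A : Vt) : vert X := xchoose (existsP (valP A)).

Lemma repK A : q (rep A) = A.
Proof.
apply: val_inj => /=; apply/esym/eqP; exact: (xchooseP (existsP (valP A))).
Qed.

Lemma q_surj A : exists x, q x = A.
Proof. by exists (rep A); exact: repK. Qed.

Definition adjq (A B : Vt) : bool :=
  [exists x, exists y, [&& q x == A, q y == B & adj X x y]].

Lemma adjq_sym : symmetric adjq.
Proof.
suff H : forall A B, adjq A B -> adjq B A by move=> A B; apply/idP/idP; apply: H.
move=> A B /existsP[x /existsP[y /and3P[a b c]]]; apply/existsP; exists y; apply/existsP; exists x.
by rewrite a b adj_sym.
Qed.

Lemma adjq_q x B : adjq (q x) B -> exists2 y, adj X x y & q y = B.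
Proof.
case/existsP=> x0 /existsP[y0 /and3P[/eqP e0 /eqP <- a]].
have : x \in orb x0 by apply/qP.
case/orbP=> c cN cx; exists (c y0).
  by rewrite -cx; move/N_aut/AutP: cN => ->.
by apply/esym/qP/orbP; exists c.
Qed.

Lemma q_adj x y : adj X x y -> adjq (q x) (q y).
Proof. by move=> a; apply/existsP; exists x; apply/existsP; exists y; rewrite !eqxx. Qed.

Lemma adjq_irr : irreflexive adjq.
Proof.
move=> A; have [x <-] := q_surj A; apply/negbTE/negP => /adjq_q [y a /esym/qP/f_orb fy].
case: fcov => _ hom _ _; have := hom _ _ a; by rewrite fy adj_irr.
Qed.

Lemma adjq_conn A B : connect adjq A B.
Proof.
have [x <-] := q_surj A; have [y <-] := q_surj B.
exact: (connect_map q_adj (adj_conn x y)).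
Qed.

Definition Xq := Graph adjq_sym adjq_irr adjq_conn.

Lemma q_cover : covering_projection (q : vert X -> vert Xq).
Proof.
case: fcov => _ hom inj _; split.
- exact: q_surj.
- exact: q_adj.
- move=> x y y' ay ay' /esym/qP/f_orb e; exact: (inj x).
- exact: adjq_q.
Qed.

Lemma CTq_CTf d : d \in CT (q : vert X -> vert Xq) -> d \in CT f.
Proof.
case/CTP=> a dq; apply/CTP; split => // x; apply: f_orb; apply/qP; by rewrite dq.
Qed.

Lemma N_CTq c : c \in N -> c \in CT (q : vert X -> vert Xq).
Proof.
move=> cN; apply/CTP; split; first exact: N_aut.
by move=> x; apply/esym/qP/orbP; exists c.
Qed.

Lemma CTq : CT (q : vert X -> vert Xq) = N.
Proof.
apply/setP => d; apply/idP/idP; last exact: N_CTq.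
move=> dC; case: (pickP (fun x : vert X => true)) => [x _ | none]; last first.
  by have -> : d = 1 by apply/permP => x; have := none x.
have : d x \in orb x by apply/qP; move/CTP: dC => [_ ->].
case/orbP=> c cN cx; rewrite (ct_eq fcov (CTq_CTf dC) (N_CT cN) (esym cx)) //.
Qed.

Lemma q_reg : regular_cover (q : vert X -> vert Xq).
Proof.
split; first exact: q_cover.
move=> x x' /qP/orbP[c cN cx]; exists c; split; first by split => //; exact: N_CTq.
by move=> d [dC dx]; apply: (ct_eq q_cover (N_CTq cN) dC (x := x)); rewrite dx.
Qed.

Lemma q_two : #|N| = 2 -> two_cover (q : vert X -> vert Xq).
Proof. by move=> cN; split; [exact: q_reg | rewrite CTq]. Qed.


Lemma g_orb (g : {perm vert X}) x y : g \in 'N(N) -> y \in orb x -> g y \in orb (g x).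
Proof.
move=> gN /orbP[c cN <-]; apply/orbP; exists (c ^ g); first by rewrite memJ_norm.
by rewrite permJ.
Qed.

Definition indf (g : {perm vert X}) (A : Vt) : Vt :=
  if g \in 'N(N) then q (g (rep A)) else A.

Lemma indf_q g x : g \in 'N(N) -> indf g (q x) = q (g x).
Proof.
move=> gN; rewrite /indf gN; apply/esym/qP; apply: g_orb => //; apply/qP; by rewrite repK.
Qed.

Lemma indf_inj g : injective (indf g).
Proof.
move=> A B; rewrite /indf; case: ifP => gN // e. have : g (rep B) \in orb (g (rep A)) by apply/qP.
move/(g_orb (groupVr gN)); rewrite !permK => /qP; by rewrite !repK.
Qed.

Definition phi g : {perm Vt} := perm (@indf_inj g).

Lemma phi_q g x : g \in 'N(N) -> phi g (q x) = q (g x).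
Proof. by move=> gN; rewrite permE indf_q. Qed.

Lemma phiM : {in 'N(N) &, {morph phi : g h / g * h}}.
Proof.
move=> g h gN hN; apply/permP => A; have [x <-] := q_surj A.
by rewrite permM !phi_q ?groupM // permM.
Qed.

Canonical phim := Morphism phiM.

Lemma phi_adj g A B : g \in 'N(N) -> g \in Aut X -> adjq A B -> adjq (phi g A) (phi g B).
Proof.
move=> gN /AutP ga; have [x <-] := q_surj A; case/adjq_q=> y a <-.
by rewrite !phi_q //; apply: q_adj; rewrite ga.
Qed.

Lemma phi_aut g : g \in 'N(N) -> g \in Aut X -> phi g \in Aut Xq.
Proof.
move=> gN ga; apply/AutP => A B /=; apply/idP/idP; last exact: phi_adj.
move/(phi_adj (groupVr gN) (groupVr ga)).
have E : phi g^-1 = (phi g)^-1 := morphV phim gN.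
by rewrite E !permK.
Qed.

Lemma phi_N c : c \in N -> phi c = 1.
Proof.
move=> cN; have cNN : c \in 'N(N) by apply: (subsetP (normG N)).
apply/permP => A; have [x <-] := q_surj A; rewrite phi_q // perm1.
by apply/esym/qP/orbP; exists c.
Qed.

Lemma phi_ker g : g \in 'N(N) -> g \in Aut X -> phi g = 1 -> g \in N.
Proof.
move=> gN ga g1.
have go : forall x, g x \in orb x.
  by move=> x; apply/qP; rewrite -phi_q // g1 perm1.
have gC : g \in CT f by apply/CTP; split => // x; apply: f_orb.
case: (pickP (fun x : vert X => true)) => [x _ | none]; last first.
  by have -> : g = 1 by apply/permP => x; have := none x.
case/orbP: (go x) => c cN cx; by rewrite (ct_eq fcov gC (N_CT cN) (esym cx)).
Qed.

Definition fq (A : Vt) := f (rep A).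

Lemma fq_q x : fq (q x) = f x.
Proof. apply: f_orb; apply/qP; by rewrite repK. Qed.

Lemma fq_cover : covering_projection (fq : vert Xq -> vert Y).
Proof. exact: (cover_factor q_cover fcov fq_q). Qed.

Lemma phi_lift g (g0 : {perm vert Y}) : g \in 'N(N) ->
  (forall x, f (g x) = g0 (f x)) -> forall A, fq (phi g A) = g0 (fq A).
Proof.
move=> gN gl A; have [x <-] := q_surj A; by rewrite phi_q // !fq_q.
Qed.

Lemma phi_CT k : k \in CT f -> k \in 'N(N) -> phi k \in CT (fq : vert Xq -> vert Y).
Proof.
case/CTP=> ka kf kN; apply/CTP; split; first exact: phi_aut.
move=> A; rewrite (phi_lift (g0 := 1) kN) ?perm1 // => x; by rewrite kf perm1.
Qed.

Hypotheses (freg : forall x x', f x = f x' -> exists2 k, k \in CT f & k x = x')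
  (CTN : CT f \subset 'N(N)).

Lemma fq_reg : regular_cover (fq : vert Xq -> vert Y).
Proof.
split; first exact: fq_cover.
move=> A A'; rewrite /fq => /freg [k kC kx]; have kN := subsetP CTN _ kC.
exists (phi k); split.
  split; first exact: phi_CT.
  by rewrite -(repK A) phi_q // kx repK.
move=> d [dC dA]; apply: (ct_eq fq_cover (phi_CT kC kN) dC (x := A)).
by rewrite dA -{1}(repK A) phi_q // kx repK.
Qed.

Lemma CTfq d : d \in CT (fq : vert Xq -> vert Y) -> exists2 k, k \in CT f & d = phi k.
Proof.
move=> dC; case: (pickP (fun A : Vt => true)) => [A _ | none]; last first.
  exists 1; first exact: group1.
  by apply/permP => A; have := none A.
have := dC; case/CTP=> _ /(_ A); rewrite /fq => /esym/freg [k kC kx].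
have kN := subsetP CTN _ kC.
exists k => //.
have E : d A = phi k A by rewrite -{2}(repK A) phi_q // kx repK.
exact: (ct_eq fq_cover dC (phi_CT kC kN) E).
Qed.

End Quot.

Section Main.
Variables (X0 X1 X2 : graph) (G : {group {perm vert X0}})
  (p1 : vert X1 -> vert X0) (p2 : vert X2 -> vert X1).
Hypotheses (reg1 : regular_cover p1) (ct1 : #|CT p1| = 2)
  (reg2 : regular_cover p2) (ct2 : #|CT p2| = 2)
  (lift1 : lifts p1 G) (lift2 : lifts p2 (lifted p1 G)).

Let cov1 := reg1.1.
Let cov2 := reg2.1.
Let G1 := lifted_group p1 G.
Let G2 := lifted_group p2 G1.
Definition ff x := p1 (p2 x).
Let fcov : covering_projection ff := cover_comp cov1 cov2.
Let K := CT_group ff.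
Let T := CT_group p2.

Lemma T_G2 : T \subset G2.
Proof.
apply/subsetP => t /CTP[ta tp]; apply/liftedP; split => //; exists 1; first exact: group1.
by move=> x; rewrite tp perm1.
Qed.

Lemma CT1_G1 : CT p1 \subset G1.
Proof.
apply/subsetP => t /CTP[ta tp]; apply/liftedP; split => //; exists 1; first exact: group1.
by move=> x; rewrite tp perm1.
Qed.

Lemma T_K : T \subset K.
Proof.
apply/subsetP => t /CTP[ta tp]; apply/CTP; split => // x; by rewrite /ff tp.
Qed.

Lemma G2_lift g : g \in G2 -> exists2 g0, g0 \in G & forall x, ff (g x) = g0 (ff x).
Proof.
case/liftedP=> _ [g1 /liftedP[_ [g0 g0G l1]] l2]; exists g0 => // x; by rewrite /ff l2 l1.
Qed.

Lemma G_lift g0 : g0 \in G -> exists2 g, g \in G2 & forall x, ff (g x) = g0 (ff x).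
Proof.
move=> g0G; have [g1 g1a /is_liftP l1] := lift1 g0G.
have g1G : g1 \in G1 by apply/liftedP; split => //; exists g0.
have [g2 g2a /is_liftP l2] := lift2 g1G.
exists g2; first by apply/liftedP; split => //; exists g1.
by move=> x; rewrite /ff l2 l1.
Qed.

Lemma freg x x' : ff x = ff x' -> exists2 k, k \in K :&: G2 & k x = x'.
Proof.
rewrite /ff => e; have [c1 [[c1C c1x] _]] := reg1.2 _ _ e.
have c1G := subsetP CT1_G1 _ c1C.
have [c2 c2a /is_liftP l2] := lift2 c1G.
have c2G : c2 \in G2 by apply/liftedP; split => //; exists c1.
have e2 : p2 (c2 x) = p2 x' by rewrite l2 c1x.
have [t [[tC tx] _]] := reg2.2 _ _ e2.
exists (c2 * t); last by rewrite permM tx.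
apply/setIP; split; last by rewrite groupM //; apply: (subsetP T_G2).
apply/CTP; split.
  by apply: groupM => //; case/CTP: tC.
move=> y; rewrite permM /ff; case/CTP: tC => _ ->; rewrite l2.
by case/CTP: c1C => _ ->.
Qed.

Lemma K_G2 : K \subset G2.
Proof.
apply/subsetP => k kK; case: (pickP (fun x : vert X2 => true)) => [x _ | none]; last first.
  by have -> : k = 1 by apply/permP => x; have := none x.
have e : ff x = ff (k x) by case/CTP: kK => _ ->.
have [k' /setIP[k'K k'G] k'x] := freg e.
by rewrite (ct_eq fcov kK k'K (esym k'x)).
Qed.

Lemma conj_K k g : k \in K -> g \in G2 -> k ^ g \in K.
Proof.
move=> /CTP[ka kf] gG; have [g0 _ gl] := G2_lift gG.
have ga : g \in Aut X2 by case/liftedP: gG.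
apply/CTP; split; first by rewrite groupJ.
move=> y; rewrite conjgE !permM gl kf -gl -permM mulVg perm1 //.
Qed.

Lemma K_normal : K <| G2.
Proof.
apply/andP; split; first exact: K_G2.
apply/subsetP => g gG; apply/normP/eqP; rewrite eqEcard cardJg leqnn andbT.
apply/subsetP => y; rewrite mem_conjg => yK.
by rewrite -(conjgKV g y) conj_K.
Qed.

Lemma X2_inhab : exists x : vert X2, true.
Proof.
case: (pickP (fun x : vert X2 => true)) => [x _ | none]; first by exists x.
have : CT p2 \subset [1] by apply/subsetP => t _; rewrite inE; apply/eqP/permP => x; have := none x.
by move/subset_leq_card; rewrite cards1 ct2.
Qed.

Lemma ff_reg : regular_cover ff.
Proof.
split; first exact: fcov.
move=> x x' /freg [k /setIP[kK _] kx]; exists k; split => // d [dK dx].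
by apply: (ct_eq fcov kK dK (x := x)); rewrite dx.
Qed.

Lemma card_K : #|K| = 4.
Proof.
have [x0 _] := X2_inhab; rewrite /K /= -(fibre_card x0 ff_reg).
have := fibre_card (p2 x0) reg1; rewrite ct1 => /eqP/cards2P [a [b [ab F1]]].
have fib : forall z, #|[set y | p2 y == z]| = 2.
  move=> z; case: cov2 => s2 _ _ _; have [y <-] := s2 z; by rewrite (fibre_card y reg2) ct2.
have -> : [set y | ff y == ff x0] = [set y | p2 y == a] :|: [set y | p2 y == b].
  apply/setP => y; have /setP /(_ (p2 y)) := F1.
  by rewrite !inE /ff => ->.
rewrite cardsU !fib.
have -> : [set y | p2 y == a] :&: [set y | p2 y == b] = set0.
  apply/setP => y; rewrite !inE; apply/negbTE; apply/negP => /andP[/eqP -> /eqP e].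
  by rewrite e eqxx in ab.
by rewrite cards0.
Qed.


Lemma G2_aut g : g \in G2 -> g \in Aut X2.
Proof. by case/liftedP. Qed.

Variable H : {group {perm vert X2}}.
Hypothesis Hc : H \in [complements to T in G2].

Lemma TH1 : T :&: H = 1. Proof. by case/complP: Hc. Qed.
Lemma TH : T * H = G2. Proof. by case/complP: Hc. Qed.
Lemma H_G2 : H \subset G2. Proof. by rewrite -TH mulG_subr. Qed.

Lemma H_normal : H <| G2.
Proof.
apply: index2_normal; first exact: H_G2.
have := Lagrange H_G2; rewrite -{2}TH (TI_cardMg TH1) /T /= ct2 mulnC.
by move/eqP; rewrite eqn_pmul2r ?cardG_gt0 // => /eqP.
Qed.

Let NN := (H :&: K)%G.

Lemma NCT : NN \subset CT ff. Proof. exact: subsetIr. Qed.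
Lemma N_normal : NN <| G2. Proof. exact: normalI H_normal K_normal. Qed.
Lemma G2_N : G2 \subset 'N(NN). Proof. exact: normal_norm N_normal. Qed.
Lemma CTN : CT ff \subset 'N(NN). Proof. exact: subset_trans K_G2 G2_N. Qed.
Lemma N_H : NN \subset H. Proof. exact: subsetIl. Qed.
Lemma N_G2 : NN \subset G2. Proof. exact: subset_trans NCT K_G2. Qed.

Lemma KTN : T * NN = K.
Proof. by rewrite /NN /= (group_modl _ T_K) TH; apply/setIidPr; exact: K_G2. Qed.

Lemma TN1 : T :&: NN = 1.
Proof. apply/trivgP; rewrite -TH1; apply: setIS; exact: subsetIl. Qed.

Lemma card_N : #|NN| = 2.
Proof.
have := card_K; rewrite -KTN (TI_cardMg TN1) /T /= ct2.
by move/eqP; rewrite -[4]/(2 * 2)%N eqn_pmul2l // => /eqP.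
Qed.

Let X1' := Xq fcov NCT.
Let p2' : vert X2 -> vert X1' := q NN.
Let p1' : vert X1' -> vert X0 := fq ff (N:=NN).

Lemma freg' x x' : ff x = ff x' -> exists2 k, k \in CT ff & k x = x'.
Proof. by case/freg=> k /setIP[kK _] kx; exists k. Qed.

Lemma two2' : two_cover p2'.
Proof. exact: (q_two fcov NCT card_N). Qed.

Lemma reg1' : regular_cover p1'.
Proof. exact: (fq_reg fcov NCT freg' CTN). Qed.

Lemma T_N g : g \in T -> g \in 'N(NN).
Proof. by move=> gT; apply: (subsetP G2_N); apply: (subsetP T_G2). Qed.

Lemma G2N g : g \in G2 -> g \in 'N(NN).
Proof. exact: (subsetP G2_N). Qed.

Lemma CT1'E : CT p1' = phi NN @: T.
Proof.
apply/setP => d; apply/idP/imsetP => [dC | [t tT ->]].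
  have [k kK ->] := CTfq freg' CTN dC.
  have := kK; rewrite -[CT ff]/(gval K) -KTN => /mulsgP[t c tT cN ->].
  exists t => //.
  have E : phi NN (t * c) = phi NN t * phi NN c := morphM (phim NN) (T_N tT) (G2N (subsetP N_G2 _ cN)).
  by rewrite E (phi_N cN) mulg1.
apply: phi_CT; [exact: (subsetP T_K) | exact: T_N].
Qed.

Lemma phiV g : g \in 'N(NN) -> phi NN g^-1 = (phi NN g)^-1.
Proof. exact: (morphV (phim NN)). Qed.

Lemma phiMM g h : g \in 'N(NN) -> h \in 'N(NN) -> phi NN (g * h) = phi NN g * phi NN h.
Proof. exact: (morphM (phim NN)). Qed.

Lemma phi_injT : {in T &, injective (phi NN)}.
Proof.
move=> t t' tT t'T e.
have tN := T_N tT; have t'N := T_N t'T.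
have e1 : phi NN (t * t'^-1) = 1 by rewrite phiMM ?groupV // phiV // e mulgV.
have tt : t * t'^-1 \in T by rewrite groupM ?groupV.
have : t * t'^-1 \in NN.
  apply: (phi_ker fcov NCT) => //; first by rewrite groupM ?groupV.
  by rewrite groupM ?groupV //; apply: G2_aut; apply: (subsetP T_G2).
move=> tN'; have : t * t'^-1 \in T :&: NN by rewrite inE tt tN'.
rewrite TN1 inE => /eqP /(congr1 (fun u => u * t')).
by rewrite mulgKV mul1g.
Qed.

Lemma ct1' : #|CT p1'| = 2.
Proof. rewrite CT1'E card_in_imset; [exact: ct2 | exact: phi_injT]. Qed.

Lemma two1' : two_cover p1'.
Proof. split; [exact: reg1' | exact: ct1']. Qed.

Lemma phiG2_lift g : g \in G2 -> phi NN g \in lifted p1' G.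
Proof.
move=> gG; have [g0 g0G gl] := G2_lift gG; apply/liftedP; split.
  exact: (phi_aut fcov NCT (G2N gG) (G2_aut gG)).
by exists g0 => // A; exact: (phi_lift NCT (G2N gG) gl).
Qed.

Lemma liftedq g' : g' \in lifted p1' G -> exists2 g, g \in G2 & g' = phi NN g.
Proof.
case/liftedP=> g'a [g0 g0G g'l].
have [g gG gl] := G_lift g0G.
have gN := G2N gG.
set u := phi NN g.
have ua : u \in Aut X1' := phi_aut fcov NCT gN (G2_aut gG).
have gVl : forall x, ff (g^-1 x) = g0^-1 (ff x).
  by move=> x; rewrite -{2}(permKV g x) gl permK.
have uVl : forall A, p1' (u^-1 A) = g0^-1 (p1' A).
  move=> A; rewrite /u -phiV //; apply: (phi_lift NCT) => //; exact: groupVr.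
have dC : g' * u^-1 \in CT p1'.
  apply/CTP; split; first by rewrite groupM ?groupV.
  by move=> A; rewrite permM uVl g'l permK.
move: dC; rewrite CT1'E => /imsetP[t tT e].
exists (t * g); first by rewrite groupM //; apply: (subsetP T_G2).
rewrite phiMM ?(T_N tT) //; transitivity ((g' * u^-1) * u); first by rewrite mulgKV.
by rewrite e.
Qed.

Lemma lifted1'E : lifted p1' G = phi NN @: G2.
Proof.
apply/setP => g'; apply/idP/imsetP => [/liftedq [g gG ->] | [g gG ->]]; first by exists g.
exact: phiG2_lift.
Qed.

Lemma lifts1' : lifts p1' G.
Proof.
move=> g0 g0G; have [g gG gl] := G_lift g0G; exists (phi NN g).
  exact: (phi_aut fcov NCT (G2N gG) (G2_aut gG)).
by apply/is_liftP; exact: (phi_lift NCT (G2N gG) gl).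
Qed.

Lemma lifts2' : lifts p2' (lifted p1' G).
Proof.
move=> g' /liftedq [g gG ->]; exists g; first exact: G2_aut.
by apply/is_liftP => x; rewrite /p2' phi_q // G2N.
Qed.

Lemma adm' : admissible2 G p1' p2'.
Proof. split; [exact: two1' | exact: two2' | exact: lifts1' | exact: lifts2']. Qed.

Lemma H_N : H \subset 'N(NN). Proof. exact: subset_trans H_G2 G2_N. Qed.
Lemma T_NN : T \subset 'N(NN). Proof. exact: subset_trans T_G2 G2_N. Qed.

Lemma CTgE (Y Yt : graph) (p : vert Yt -> vert Y) : gval (CT_group p) = CT p.
Proof. by []. Qed.

Lemma split1' : split p1' G.
Proof.
exists (phim NN @* H)%G; apply/complP; split.
  apply/trivgP/subsetP => x /setIP[]; rewrite ?CTgE CT1'E => /imsetP[t tT ->].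
  rewrite /= (morphimEsub _ H_N) => /imsetP[h hH e].
  have tN := T_N tT; have hN := subsetP H_N _ hH.
  have e1 : phi NN (t * h^-1) = 1 by rewrite phiMM ?groupV // phiV // e mulgV.
  have : t * h^-1 \in NN.
    apply: (phi_ker fcov NCT) => //; first by rewrite groupM ?groupV.
    by apply: G2_aut; rewrite groupM ?groupV //; [apply: (subsetP T_G2) | apply: (subsetP H_G2)].
  move/(subsetP N_H) => th; have tH : t \in H by rewrite -(mulgKV h t) groupM.
  have : t \in T :&: H by rewrite inE tT tH.
  by rewrite TH1 inE => /eqP ->; rewrite inE; apply/eqP; exact: (morph1 (phim NN)).
rewrite CT1'E lifted1'E /=.
have ET : phi NN @: T = phim NN @* T := esym (morphimEsub (phim NN) T_NN).
have EG : phi NN @: G2 = phim NN @* G2 := esym (morphimEsub (phim NN) G2_N).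
rewrite ET EG -morphimMl; [by rewrite TH | exact: T_NN].
Qed.

Variable H' : {group {perm vert X1'}}.
Hypothesis H'c : H' \in [complements to CT p1' in lifted p1' G].

Let Hpre := (G2 :&: phim NN @*^-1 H')%G.

Lemma HpreP g : reflect (g \in G2 /\ phi NN g \in H') (g \in Hpre).
Proof.
apply: (iffP setIP) => [[gG /morphpreP[_ ->]] | [gG gH]]; first by [].
by split => //; apply/morphpreP; split => //; exact: G2N.
Qed.

Lemma N_Hpre : NN \subset Hpre.
Proof.
apply/subsetP => c cN; apply/HpreP; split; first exact: (subsetP N_G2).
by rewrite (phi_N cN) group1.
Qed.

Lemma CT1'H'1 : CT p1' :&: H' = 1. Proof. by case/complP: H'c. Qed.
Lemma CT1'H' : CT p1' * H' = lifted p1' G. Proof. by case/complP: H'c. Qed.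

Lemma Hpre_compl : Hpre \in [complements to T in G2].
Proof.
apply/complP; split.
  apply/trivgP/subsetP => t /setIP[tT /HpreP[tG tH]].
  have : phi NN t \in CT p1' :&: H' by rewrite inE tH CT1'E imset_f.
  rewrite CT1'H'1 inE => /eqP e1.
  have : t \in NN by apply: (phi_ker fcov NCT) => //; [exact: T_N | exact: G2_aut].
  move=> tN; have : t \in T :&: NN by rewrite inE tT tN.
  by rewrite TN1.
apply/eqP; rewrite eqEsubset mul_subG ?T_G2 //=; last exact: subsetIl.
apply/subsetP => g gG; have := phiG2_lift gG; rewrite -CT1'H' => /mulsgP[d h' dC h'H e].
move: dC; rewrite CT1'E => /imsetP[t tT dE].
have tG : t \in G2 by apply: (subsetP T_G2).
rewrite -(mulVKg t g); apply: mem_mulg => //; apply/HpreP; split; first by rewrite groupM ?groupV.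
by rewrite phiMM ?groupV ?G2N // phiV ?G2N // e dE mulKg.
Qed.

Lemma trans_transfer : transitive_cmp Hpre -> transitive_cmp H'.
Proof.
case/imsetP=> x0 _ Ox0; apply/imsetP; exists (p2' x0); first exact: in_setT.
apply/esym/eqP; rewrite eqEsubset subsetT /=; apply/subsetP => B _.
have [y <-] := q_surj B.
have : y \in orbit 'P Hpre x0 by rewrite -Ox0 in_setT.
case/orbitP=> h /HpreP[hG hH] <-; apply/orbitP; exists (phi NN h) => //.
change (phi NN h (p2' x0) = q NN (h x0)); by rewrite /p2' phi_q // G2N.
Qed.

Lemma sect_transfer : sectional p2 Hpre -> sectional p1' H'.
Proof.
case=> S secS invS.
have Sinv : forall c x, c \in NN -> x \in S -> c x \in S.
  move=> c x cN xS; rewrite -(invS c (subsetP N_Hpre _ cN)); exact: imset_f.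
exists (p2' @: S).
  move=> v; apply/eqP/cards1P.
  case: cov1 => s1 _ _ _; have [y1 y1v] := s1 v.
  have /eqP/cards1P [x Ex] := secS y1.
  have : x \in [set x in S | p2 x == y1] by rewrite Ex set11.
  rewrite inE => /andP[xS /eqP xy].
  exists (p2' x); apply/setP => A; rewrite !inE; apply/andP/eqP => [[/imsetP[x' x'S ->] /eqP e] | ->].
    have e' : ff x = ff x' by rewrite [ff x]/ff xy y1v -e; exact: (fq_q NCT).
    have [k kK kx] := freg' e'.
    move: kK; rewrite -[CT ff]/(gval K) -KTN => /mulsgP[t c tT cN kE].
    rewrite kE permM in kx.
    have tx : t x = x.
      have cx' : c^-1 x' \in S by apply: Sinv; rewrite ?groupV.
      have txS : t x \in S by rewrite -kx permK in cx'.
      have : t x \in [set x in S | p2 x == y1].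
        by rewrite inE txS /=; move/CTP: tT => [_ ->]; rewrite xy.
      by rewrite Ex inE => /eqP.
    rewrite tx in kx; rewrite -kx; apply/esym/qP/orbP; by exists c.
  split; first exact: imset_f.
  by rewrite /p1' /p2' (fq_q NCT) /ff xy y1v.
move=> h' h'H.
have h'L : h' \in lifted p1' G by rewrite -CT1'H'; apply: (subsetP (mulG_subr _ _)).
have [g gG ge] := liftedq h'L.
have gH : g \in Hpre by apply/HpreP; split => //; rewrite -ge.
rewrite -imset_comp -{2}(invS g gH) -imset_comp; apply: eq_imset => x /=.
by rewrite ge /p2' phi_q // G2N.
Qed.
End Main.

Lemma VT (X0 X1 : graph) (G : {group {perm vert X0}}) (p1 : vert X1 -> vert X0) :
  covering_projection p1 -> vertex_transitive (lifted p1 G) -> vertex_transitive G.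
Proof.
case=> s1 _ _ _ /imsetP[y0 _ Oy]; apply/imsetP; exists (p1 y0); first exact: in_setT.
apply/setP => v; rewrite in_setT; apply/esym; have [y <-] := s1 v.
have : y \in orbit 'P (lifted p1 G) y0 by rewrite -Oy in_setT.
case/orbitP=> g1 /liftedP[_ [g gG gl]] <-; apply/orbitP; exists g => //.
by rewrite /= gl.
Qed.

Theorem lemma5p2 (X0 X1 X2 : graph) (G : {group {perm vert X0}})
  (p1 : vert X1 -> vert X0) (p2 : vert X2 -> vert X1) :
  arc_transitive G ->
  admissible2 G p1 p2 ->
  (split_transitive p2 (lifted p1 G) ->
     exists (X1' : graph) (p1' : vert X1' -> vert X0) (p2' : vert X2 -> vert X1'),
       admissible2 G p1' p2' /\ split_transitive p1' G) /\
  (split_sectional p2 (lifted p1 G) ->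
     exists (X1' : graph) (p1' : vert X1' -> vert X0) (p2' : vert X2 -> vert X1'),
       admissible2 G p1' p2' /\ split_sectional p1' G).
Proof.
move=> _ [[reg1 ct1] [reg2 ct2] l1 l2].
have core : forall H : {group {perm vert X2}},
    H \in [complements to CT p2 in lifted p2 (lifted p1 G)] ->
    exists (X1' : graph) (p1' : vert X1' -> vert X0) (p2' : vert X2 -> vert X1'),
      [/\ admissible2 G p1' p2', split p1' G &
        forall H' : {group {perm vert X1'}},
          H' \in [complements to CT p1' in lifted p1' G] ->
          exists2 Hp : {group {perm vert X2}},
            Hp \in [complements to CT p2 in lifted p2 (lifted p1 G)] &
            (transitive_cmp Hp -> transitive_cmp H') /\
            (sectional p2 Hp -> sectional p1' H')].
  move=> H Hc.
  do 3 eexists; split.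
  - exact: (adm' reg1 ct1 reg2 ct2 l1 l2 Hc).
  - by apply: split1'.
  - move=> H' H'c; eexists; first exact: (Hpre_compl ct2 l2 Hc H'c).
    split; [exact: (trans_transfer ct2 l2 Hc (H' := H')) | exact: (sect_transfer ct2 l1 l2 Hc H'c)].
split.
  case=> vt _ [H Hc] allH.
  have [X1' [p1' [p2' [a c d]]]] := core H Hc.
have b : lifts p1' G by case: a.
  exists X1', p1', p2'; split => //; split => //.
    exact: (VT (reg1.1) vt).
  by move=> H' /d [Hp Hpc [tr _]]; apply: tr; apply: allH.
case=> vt _ [H Hc] allH.
have [X1' [p1' [p2' [a c d]]]] := core H Hc.
have b : lifts p1' G by case: a.
exists X1', p1', p2'; split => //; split => //.
  exact: (VT (reg1.1) vt).
by move=> H' /d [Hp Hpc [_ se]]; apply: se; apply: allH.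
Qed.
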